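(* Let $T\in\mathsf{SYT}(\lambda)$, let $\alpha=\mathsf{Des}(T)=(\alpha_1,\dots,\alpha_\ell)$, and let $I=[i,i+2m]$ be a Dyck pattern interval of $T$; write $I^-=[i,i+m-1]$ and $I^+=[i+m+1,i+2m]$. Then there is $1\le j<\ell$ with $I^-\cup\{i+m\}\subseteq\alpha^{(j)}$ and $I^+\subseteq\alpha^{(j+1)}$.
   Context: French notation; $|\lambda|=N$; $\mathsf{SYT}(\lambda)$ standard tableaux. The reading word $\mathsf{row}(T)$ reads rows left to right from the top row to the bottom row. For a permutation $\pi$ of $[N]$ and $I=[i,i+2m]\subseteq[N]$, $m\ge1$, $I$ is a Dyck pattern interval of $\pi$ if the RSK insertion tableau of the subword $\pi|_I$ of letters in $I$ has bottom row $i,\dots,i+m$ and top row $i+m+1,\dots,i+2m$; a Dyck pattern interval of $T$ is one of $\mathsf{row}(T)$. A letter $d$ is a descent of $T$ if $d+1$ lies in a strictly higher row than $d$; if the descents are $d_1<\dots<d_k$, then $\mathsf{Des}(T)=(d_1,d_2-d_1,\dots,d_k-d_{k-1},N-d_k)$. For a composition $\alpha=(\alpha_1,\dots,\alpha_\ell)$ of $N$, $\alpha^{(j)}=\{\alpha_1+\dots+\alpha_{j-1}+1,\dots,\alpha_1+\dots+\alpha_j\}$. *)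

(* Defs.v *)
From mathcomp Require Import all_boot.
Set Implicit Arguments. Unset Strict Implicit. Unset Printing Implicit Defensive.

(* Tableaux in French notation: a tableau is a list of rows, row 0 being the
   BOTTOM (longest) row; row k+1 sits directly above row k. *)

Definition is_partition (la : seq nat) : bool :=
  sorted geq la && all (fun p => 0 < p) la.

Definition shape (t : seq (seq nat)) : seq nat := map size t.

Definition rows_incr (t : seq (seq nat)) : bool := all (sorted ltn) t.

Definition cols_incr (t : seq (seq nat)) : bool :=
  [forall k : 'I_(size t),
     forall c : 'I_(size (nth [::] t k.+1)),
       nth 0 (nth [::] t k) c < nth 0 (nth [::] t k.+1) c].

Definition is_SYT (la : seq nat) (t : seq (seq nat)) : bool :=
  [&& is_partition la, shape t == la, rows_incr t, cols_incr t &
      perm_eq (flatten t) (iota 1 (sumn la))].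

Definition reading_word (t : seq (seq nat)) : seq nat := flatten (rev t).

Fixpoint rsk_insert (t : seq (seq nat)) (x : nat) : seq (seq nat) :=
  match t with
  | [::] => [:: [:: x]]
  | r :: t' =>
      let k := find (fun y => x < y) r in
      if k == size r then rcons r x :: t'
      else set_nth 0 r k x :: rsk_insert t' (nth 0 r k)
  end.

Definition rsk_P (w : seq nat) : seq (seq nat) := foldl rsk_insert [::] w.

Definition restrict (w : seq nat) (a b : nat) : seq nat :=
  [seq x <- w | a <= x <= b].

Definition dyck_interval_word (N : nat) (w : seq nat) (i m : nat) : Prop :=
  [/\ 1 <= m, 1 <= i, i + 2 * m <= N &
      rsk_P (restrict w i (i + 2 * m)) =
        [:: iota i m.+1; iota (i + m).+1 m]].

Definition dyck_interval (t : seq (seq nat)) (i m : nat) : Prop :=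
  dyck_interval_word (sumn (shape t)) (reading_word t) i m.

Definition row_of (t : seq (seq nat)) (d : nat) : nat := find (fun r => d \in r) t.

Definition is_descent (t : seq (seq nat)) (d : nat) : bool :=
  row_of t d < row_of t d.+1.

Definition descents (t : seq (seq nat)) : seq nat :=
  [seq d <- iota 1 (sumn (shape t)).-1 | is_descent t d].

Definition Des (t : seq (seq nat)) : seq nat :=
  pairmap (fun a b => b - a) 0 (rcons (descents t) (sumn (shape t))).

(* alpha^(j), 1-indexed block of the composition alpha *)
Definition block (alpha : seq nat) (j : nat) : pred nat :=
  fun x => (sumn (take j.-1 alpha) < x) && (x <= sumn (take j alpha)).

(* Main.v *)
Require Import Defs.
From mathcomp Require Import all_boot.
From mathcomp Require Import zify.
Set Implicit Arguments. Unset Strict Implicit. Unset Printing Implicit Defensive.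

Lemma ins_cons r t x : rsk_insert (r :: t) x =
  if find (fun y => x < y) r == size r then rcons r x :: t
  else set_nth 0 r (find (fun y => x < y) r) x
         :: rsk_insert t (nth 0 r (find (fun y => x < y) r)).
Proof. by []. Qed.

Lemma R_cons r t z : row_of (r :: t) z = if z \in r then 0 else (row_of t z).+1.
Proof. by []. Qed.

Lemma mem_setnth r k x z : uniq r -> k < size r ->
  (z \in set_nth 0 r k x) = (z == x) || ((z \in r) && (z != nth 0 r k)).
Proof.
move=> u h; rewrite set_nthE h.
move: (drop_nth 0 h) => E.
have E2 : r = take k r ++ nth 0 r k :: drop k.+1 r by rewrite -E cat_take_drop.
clear E; move: E2 u; move: (take k r) (drop k.+1 r) (nth 0 r k) => A B y ->.
rewrite cat_uniq /= => /and3P [_ /norP [yA _] /andP [yB _]].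
rewrite !mem_cat !in_cons.
case: (eqVneq z y) => [->|zy]; first by rewrite (negbTE yA) (negbTE yB) /= orbF.
by rewrite /= andbT; case: (z \in A); case: (z == x).
Qed.

Lemma perm_setnth r k x l : k < size r ->
  perm_eq (set_nth 0 r k x ++ nth 0 r k :: l) (x :: r ++ l).
Proof.
move=> h; rewrite set_nthE h.
move: (drop_nth 0 h) => E.
have E2 : r = take k r ++ nth 0 r k :: drop k.+1 r by rewrite -E cat_take_drop.
rewrite [in X in perm_eq _ X]E2; clear E E2; move: (take k r) (drop k.+1 r) (nth 0 r k) => A B y.
apply/permP => p; rewrite /= !count_cat /=; lia.
Qed.

Lemma ins_perm t x : perm_eq (flatten (rsk_insert t x)) (x :: flatten t).
Proof.
elim: t x => [|r t IH] x; first by [].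
rewrite ins_cons; case: ifP => Hk /=.
  by rewrite -cat_cons perm_cat2r perm_rcons.
have hk : find (fun y => x < y) r < size r by rewrite ltn_neqAle Hk find_size.
apply: perm_trans (perm_setnth _ _ hk).
by rewrite perm_cat2l.
Qed.

Lemma mem_ins t x z : (z \in flatten (rsk_insert t x)) = (z == x) || (z \in flatten t).
Proof. by rewrite (perm_mem (ins_perm t x)) in_cons. Qed.

Lemma R_ins_self t x : row_of (rsk_insert t x) x = 0.
Proof.
case: t => [|r t] /=; first by rewrite inE eqxx.
case: ifP => Hk /=; first by rewrite mem_rcons inE eqxx.
have hk : find (fun y => x < y) r < size r by rewrite ltn_neqAle Hk find_size.
suff -> : x \in set_nth 0 r (find (fun y => x < y) r) x by [].
by rewrite set_nthE hk mem_cat inE eqxx orbT.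
Qed.
Lemma srt_nth r i j : sorted ltn r -> i < j -> j < size r -> nth 0 r i < nth 0 r j.
Proof.
move=> sr ij js; apply: (sorted_ltn_nth ltn_trans 0 sr) => //; rewrite inE //.
exact: ltn_trans ij js.
Qed.

Lemma bump_succ r a : sorted ltn r -> a.+1 \in r ->
  find (fun y => a < y) r < size r /\ nth 0 r (find (fun y => a < y) r) = a.+1.
Proof.
move=> sr ar.
have hs : has (fun y => a < y) r by apply/hasP; exists a.+1.
have ks := hs; rewrite has_find in ks; split => //.
have ay := nth_find 0 hs; move: ay.
set k := find _ r => ay.
have ir : index a.+1 r < size r by rewrite index_mem.
have ka : k <= index a.+1 r.
  rewrite leqNgt; apply/negP => lt.
  by move: (before_find 0 lt); rewrite nth_index // ltnSn.
move: ka; rewrite leq_eqVlt => /orP [/eqP ->| lt]; first by rewrite nth_index.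
by move: (srt_nth sr lt ir); rewrite nth_index //; move=> h; exfalso; move: ay h => /=; lia.
Qed.

Lemma bump_not r a x : sorted ltn r -> a \in r -> x < a ->
  nth 0 r (find (fun y => x < y) r) <= a.
Proof.
move=> sr ar xa.
set k := find _ r.
have ir : index a r < size r by rewrite index_mem.
have ka : k <= index a r.
  rewrite leqNgt; apply/negP => lt.
  by move: (before_find 0 lt); rewrite nth_index // xa.
move: ka; rewrite leq_eqVlt => /orP [/eqP ->| lt]; first by rewrite nth_index.
by move: (srt_nth sr lt ir); rewrite nth_index //; move=> h; apply: ltnW.
Qed.

Lemma ins_sorted t x : all (sorted ltn) t -> uniq (x :: flatten t) ->
  all (sorted ltn) (rsk_insert t x).
Proof.
elim: t x => [|r t IH] x; first by [].
rewrite /= => /andP [sr st] /andP [xn]; rewrite mem_cat negb_or in xn.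
case/andP: xn => xr xt; rewrite cat_uniq => /and3P [ur hrt ut].
move: (sr) => /(sortedP 0) sr'.
case: ifP => Hk /=.
  rewrite st andbT; apply/(sortedP 0) => i; rewrite size_rcons ltnS => hi.
  rewrite !nth_rcons hi; case: ltnP => hi1; first exact: sr'.
  have e : i.+1 = size r by apply/eqP; rewrite eqn_leq hi hi1.
  rewrite e eqxx.
  have lt : i < find (fun y => x < y) r by rewrite (eqP Hk) -e.
  move: (before_find 0 lt) => /= nx.
  have ne : nth 0 r i != x.
    by apply: contra xr => /eqP <-; rewrite mem_nth // -e.
  move: nx ne; rewrite ltnNge; move=> /negbFE; rewrite leq_eqVlt => /orP [/eqP -> | //].
  by rewrite eqxx.
have hk : find (fun y => x < y) r < size r by rewrite ltn_neqAle Hk find_size.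
set k := find (fun y => x < y) r in hk Hk *.
have hs : has (fun y => x < y) r by rewrite has_find.
have xy : x < nth 0 r k := nth_find 0 hs.
apply/andP; split.
  apply/(sortedP 0) => i; rewrite size_set_nth (maxn_idPr hk) => hi.
  rewrite !nth_set_nth /=.
  case: (eqVneq i k) => [ik|ik]; case: (eqVneq i.+1 k) => [i1k|i1k].
  - by move: ik i1k => ->; lia.
  - by rewrite ik; apply: ltn_trans xy _; apply: sr'; rewrite -ik.
  - have lt : i < k by rewrite -i1k.
    move: (before_find 0 lt) => /= nx.
    have ne : nth 0 r i != x.
      by apply: contra xr => /eqP <-; rewrite mem_nth // (ltn_trans _ hi).
    move: nx ne; rewrite ltnNge; move=> /negbFE; rewrite leq_eqVlt => /orP [/eqP -> | //].
    by rewrite eqxx.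
  - exact: sr'.
apply: IH => //=; rewrite ut andbT.
have : nth 0 r k \in r by rewrite mem_nth.
move: hrt => /hasPn h yr; apply/negP => yt; by move: (h _ yt); rewrite yr.
Qed.

Lemma ins_cons1 r t x : find (fun y => x < y) r == size r ->
  rsk_insert (r :: t) x = rcons r x :: t.
Proof. by rewrite ins_cons => ->. Qed.
Lemma ins_cons2 r t x : find (fun y => x < y) r < size r ->
  rsk_insert (r :: t) x = set_nth 0 r (find (fun y => x < y) r) x
         :: rsk_insert t (nth 0 r (find (fun y => x < y) r)).
Proof. by rewrite ins_cons ltn_neqAle => /andP [/negbTE ->]. Qed.

Lemma flat_cons (r : seq nat) t : flatten (r :: t) = r ++ flatten t.
Proof. by []. Qed.

Definition Inv (t : seq (seq nat)) := all (sorted ltn) t && uniq (flatten t).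

Lemma ins_inv t x : Inv t -> x \notin flatten t -> Inv (rsk_insert t x).
Proof.
case/andP => st ut xt; apply/andP; split.
  by apply: ins_sorted => //=; rewrite xt.
by rewrite (perm_uniq (ins_perm t x)) /= xt.
Qed.

Lemma new_a t a : Inv t -> a \notin flatten t -> a.+1 \in flatten t ->
  0 < row_of (rsk_insert t a) a.+1.
Proof.
case: t => [|r t] //= /andP [/andP [sr st]]; rewrite cat_uniq => /and3P [ur hrt ut].
move=> an bn.
case: ifP => Hk; rewrite R_cons.
  rewrite mem_rcons in_cons.
  case: ifP => // /orP [/eqP e|br]; first by move: e; lia.
  by case: (bump_succ sr br) => h _; move: h; rewrite (eqP Hk) ltnn.
have hk : find (fun y => a < y) r < size r by rewrite ltn_neqAle Hk find_size.
rewrite mem_setnth //.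
case: ifP => // /orP [/eqP e|/andP [br ne]]; first by move: e; lia.
by case: (bump_succ sr br) => _ h; rewrite h eqxx in ne.
Qed.

Lemma B_pres t x a : Inv t -> x \notin flatten t -> x != a -> x != a.+1 ->
  a \in flatten t -> a.+1 \in flatten t ->
  row_of t a < row_of t a.+1 -> row_of (rsk_insert t x) a < row_of (rsk_insert t x) a.+1.
Proof.
elim: t x => [|r t IH] x //.
move=> I; move: (I) => /andP [/andP [sr st]]; rewrite flat_cons cat_uniq => /and3P [ur hrt ut].
rewrite mem_cat negb_or => /andP [xr xt] xa xb.
rewrite ?flat_cons !mem_cat !R_cons.
case: (boolP (a.+1 \in r)) => br //.
move=> ain bin; rewrite orFb in bin.
case: (boolP (find (fun y => x < y) r == size r)) => Hk.
  rewrite (ins_cons1 t Hk) !R_cons.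
  by rewrite !mem_rcons !in_cons ![_ == x]eq_sym (negbTE xa) (negbTE xb) /= (negbTE br).
have hk : find (fun y => x < y) r < size r by rewrite ltn_neqAle Hk find_size.
rewrite (ins_cons2 t hk) !R_cons.
set y := nth 0 r _.
have yr : y \in r by rewrite mem_nth.
have yt : y \notin flatten t by apply/negP => yt; move/hasPn: hrt => /(_ _ yt); rewrite yr.
rewrite !mem_setnth // ![_ == x]eq_sym (negbTE xa) (negbTE xb) /= (negbTE br) /=.
case: (boolP (a \in r)) => ar /=.
  case: (eqVneq a y) => [ay|ay] //= _.
  rewrite -ay R_ins_self; apply: new_a => //.
    by apply/andP.
  by apply/negP => at'; move/hasPn: hrt => /(_ _ at'); rewrite ar.
rewrite (negbTE ar) orFb in ain; rewrite !ltnS => h.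
apply: IH => //; first by apply/andP.
  by apply: contraNneq ar => <-.
by apply: contraNneq br => <-.
Qed.

Lemma Le_pres t x a : Inv t -> x \notin flatten t -> x != a -> x != a.+1 ->
  a \in flatten t -> a.+1 \in flatten t ->
  row_of t a.+1 <= row_of t a -> row_of (rsk_insert t x) a.+1 <= row_of (rsk_insert t x) a.
Proof.
elim: t x => [|r t IH] x //.
move=> I; move: (I) => /andP [/andP [sr st]]; rewrite flat_cons cat_uniq => /and3P [ur hrt ut].
rewrite mem_cat negb_or => /andP [xr xt] xa xb.
rewrite ?flat_cons !mem_cat !R_cons.
move=> ain bin.
case: (boolP (find (fun y => x < y) r == size r)) => Hk.
  rewrite (ins_cons1 t Hk) !R_cons.
  by rewrite !mem_rcons !in_cons ![_ == x]eq_sym (negbTE xa) (negbTE xb) /=.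
have hk : find (fun y => x < y) r < size r by rewrite ltn_neqAle Hk find_size.
have hs : has (fun y => x < y) r by rewrite has_find.
have xy : x < nth 0 r (find (fun y => x < y) r) := nth_find 0 hs.
set y := nth 0 r _ in xy *.
have yr : y \in r by rewrite mem_nth.
have yt : y \notin flatten t by apply/negP => yt; move/hasPn: hrt => /(_ _ yt); rewrite yr.
rewrite (ins_cons2 t hk) -/y !R_cons.
rewrite !mem_setnth // -/y ![_ == x]eq_sym (negbTE xa) (negbTE xb) /=.
case: (boolP (a.+1 \in r)) => br /=.
  case: (eqVneq a.+1 y) => [eb|eb] //= _.
  have xa' : x < a by rewrite ltn_neqAle xa -ltnS eb xy.
  case: (boolP (a \in r)) => ar.
    by move: (bump_not sr ar xa'); rewrite -/y -eb ltnn.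
  by rewrite -eb R_ins_self.
case: (boolP (a \in r)) => ar //=.
rewrite (negbTE ar) orFb in ain; rewrite (negbTE br) orFb in bin; rewrite !ltnS => h.
have ya : y != a by apply: contraNneq ar => <-.
by rewrite ?(negbTE ar) /=; apply: IH => //; [apply/andP|apply: contraNneq br => <-].
Qed.

Lemma rskP_rcons u x : rsk_P (rcons u x) = rsk_insert (rsk_P u) x.
Proof. by rewrite /rsk_P foldl_rcons. Qed.

Lemma P_inv u : uniq u -> Inv (rsk_P u) /\ perm_eq (flatten (rsk_P u)) u.
Proof.
elim/last_ind: u => [|u x IH]; first by [].
rewrite rcons_uniq => /andP [xu uu]; case: (IH uu) => I p; rewrite rskP_rcons; split.
  by apply: ins_inv => //; rewrite (perm_mem p).
apply: perm_trans (ins_perm _ _) _.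
by rewrite perm_sym perm_rcons perm_cons perm_sym.
Qed.

Lemma idx1 (z x : nat) : index z [:: x] = if x == z then 0 else 1.
Proof. by []. Qed.

Lemma rsk_order u a : uniq u -> a \in u -> a.+1 \in u ->
  (index a.+1 u < index a u -> row_of (rsk_P u) a < row_of (rsk_P u) a.+1) /\
  (index a u < index a.+1 u -> row_of (rsk_P u) a.+1 <= row_of (rsk_P u) a).
Proof.
elim/last_ind: u => [|u x IH] //.
move=> U; move: (U); rewrite rcons_uniq => /andP [xu uu].
case: (P_inv uu) => I p.
have memP z : (z \in flatten (rsk_P u)) = (z \in u) := perm_mem p z.
rewrite rskP_rcons !mem_rcons !in_cons -!cats1 !index_cat !idx1.
case: (eqVneq a x) => [ax|ax].
  rewrite -ax in xu *; rewrite (negbTE xu) ?eqxx /= => _.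
  case/orP => [/eqP e|bu]; first by move: e; lia.
  have bs : index a.+1 u < size u by rewrite index_mem.
  rewrite bu; split => [_|]; last by rewrite addn0 ltnNge ltnW.
  rewrite R_ins_self; apply: new_a => //; by rewrite memP.
case: (eqVneq a.+1 x) => [bx|bx].
  rewrite -bx in xu *; rewrite (negbTE xu) ?eqxx /= => au _.
  have as' : index a u < size u by rewrite index_mem.
  rewrite au; split => [|_]; first by rewrite addn0 ltnNge ltnW.
  by rewrite R_ins_self.
rewrite /= => au bu.
case: (IH uu au bu) => h1 h2; rewrite au bu; split => h.
  apply: B_pres => //; rewrite ?memP //; try by rewrite eq_sym.
  exact: h1.
apply: Le_pres => //; rewrite ?memP //; try by rewrite eq_sym.
exact: h2.
Qed.

Lemma index_filter (p : pred nat) s a b : p a -> p b -> a != b ->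
  (index a (filter p s) < index b (filter p s)) = (index a s < index b s).
Proof.
move=> pa pb ab; elim: s => [|z s IH] //=.
case: (eqVneq z a) => [za|za].
  rewrite -za in pa ab *; rewrite pa /= eqxx (negbTE ab) //.
case: (eqVneq z b) => [zb|zb].
  rewrite -zb in pb ab *; rewrite pb /= eqxx (negbTE za) //.
case: (p z) => /=; by rewrite ?(negbTE za) ?(negbTE zb) ?ltnS.
Qed.

Lemma perm_flat_rev (T : seq (seq nat)) : perm_eq (flatten (rev T)) (flatten T).
Proof. by apply: perm_flatten; rewrite perm_rev. Qed.

Lemma rw_order T x y : all (sorted ltn) T -> uniq (flatten T) ->
  x \in flatten T -> y \in flatten T -> x < y ->
  (index y (flatten (rev T)) < index x (flatten (rev T))) = (row_of T x < row_of T y).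
Proof.
elim: T => [|r T IH] //=.
move=> /andP [sr st]; rewrite cat_uniq => /and3P [ur hrt ut].
have disj z : z \in r -> (z \in flatten T) = false.
  by move=> zr; apply/negP => zt; move/hasPn: hrt => /(_ _ zt); rewrite zr.
rewrite !mem_cat => xm ym xy.
rewrite rev_cons flatten_rcons !index_cat !(perm_mem (perm_flat_rev T)).
case: (boolP (x \in r)) => xr; case: (boolP (y \in r)) => yr.
- rewrite (disj _ xr) (disj _ yr) ltn_add2l ltnn.
  apply/negP => h; move: (sorted_ltn_index ltn_trans sr _ _ yr xr h); lia.
- move: ym; rewrite (negbTE yr) /= => ym; rewrite (disj _ xr) ym.
  have : index y (flatten (rev T)) < size (flatten (rev T)).
    by rewrite index_mem (perm_mem (perm_flat_rev T)).
  move=> h; apply/idP; exact: leq_trans h (leq_addr _ _).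
- move: xm; rewrite (negbTE xr) /= => xm; rewrite (disj _ yr) xm.
  have : index x (flatten (rev T)) < size (flatten (rev T)).
    by rewrite index_mem (perm_mem (perm_flat_rev T)).
  move=> h; apply/negP => h2; lia.
- move: xm ym; rewrite (negbTE xr) (negbTE yr) /= => xm ym; rewrite xm ym ltnS.
  exact: IH.
Qed.

Lemma psum a0 S j : sorted leq (a0 :: S) -> j <= size S ->
  sumn (take j (pairmap (fun a b => b - a) a0 S)) = nth a0 (a0 :: S) j - a0.
Proof.
elim: S a0 j => [|s S IH] a0 j.
  by case: j => //= _ _; rewrite subnn.
case: j => [|j] /=; first by rewrite subnn.
move=> /andP [a0s ps] js.
rewrite IH //.
have sv : s <= nth s (s :: S) j.
  case: j js => [|j] //= js.
  move: (order_path_min leq_trans ps) => /allP; apply.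
  by rewrite mem_nth.
rewrite (set_nth_default a0 s) //=.
move: sv; rewrite (set_nth_default a0 s) //= => sv.
lia.
Qed.

Theorem lemma4p20 (la : seq nat) (T : seq (seq nat)) (i m : nat) :
  is_SYT la T -> dyck_interval T i m ->
  exists j : nat,
    [/\ 1 <= j, j < size (Des T),
        (forall x, i <= x <= i + m -> x \in block (Des T) j) &
        (forall x, (i + m).+1 <= x <= i + 2 * m -> x \in block (Des T) j.+1)].
Proof.
case/and5P => _ _ st _ pT [Hm Hi HN HP].
set N := sumn (shape T) in HN *.
have uT : uniq (flatten T) by rewrite (perm_uniq pT) iota_uniq.
set rw := reading_word T.
have urw : uniq rw by rewrite /rw /reading_word (perm_uniq (perm_flat_rev T)).
set w := restrict rw i (i + 2 * m) in HP.
have uw : uniq w by rewrite filter_uniq.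
case: (P_inv uw) => _; rewrite HP => pw.
have memw z : (z \in w) = (i <= z <= i + 2 * m).
  have fe : flatten [:: iota i m.+1; iota (i + m).+1 m] = iota i m.+1 ++ iota (i + m).+1 m by rewrite /flatten /= cats0.
  rewrite -(perm_mem pw) fe mem_cat !mem_iota; lia.
have memT z : z \in w -> z \in flatten T.
  by rewrite mem_filter => /andP [_]; rewrite /rw /reading_word (perm_mem (perm_flat_rev T)).
have rowP z : row_of (rsk_P w) z =
    if i <= z <= i + m then 0 else if (i + m).+1 <= z <= i + 2 * m then 1 else 2.
  rewrite HP !R_cons !mem_iota.
  have -> : row_of [::] z = 0 by [].
  do ! case: ifP; lia.
have rowA z : i <= z <= i + m -> row_of (rsk_P w) z = 0 by move=> h; rewrite rowP h.
have rowB z : i + m < z <= i + 2 * m -> row_of (rsk_P w) z = 1.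
  by move=> h; rewrite rowP h; case: ifP => // h'; exfalso; move: h h'; clear; lia.
have desc d : i <= d < i + 2 * m -> is_descent T d = (d == i + m).
  move=> hd.
  have dw : d \in w by rewrite memw; lia.
  have d1w : d.+1 \in w by rewrite memw; lia.
  have E : (index d.+1 w < index d w) = is_descent T d.
    rewrite /w /restrict index_filter /=; last by rewrite eq_sym neq_ltn ltnSn.
    - by rewrite rw_order // ?memT.
    - apply/andP; lia.
    - apply/andP; lia.
  have ne : index d w != index d.+1 w.
    apply/negP => /eqP e.
    by move: (nth_index 0 dw); rewrite e (nth_index 0 d1w); lia.
  case: (rsk_order uw dw d1w) => h1 h2.
  rewrite -E; case: (eqVneq d (i + m)) => [e|e].
    apply/negP => h; have h' : index d w < index d.+1 w by lia.
    have ra : row_of (rsk_P w) (i + m) = 0 by apply: rowA; apply/andP; split; clear; lia.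
    have rb : row_of (rsk_P w) (i + m).+1 = 1 by apply: rowB; apply/andP; split; clear -Hm; lia.
    by move: (h2 h'); rewrite e ra rb.
  apply/negP => h; move: (h1 h).
  case: (ltngtP d (i + m)) => c; last by rewrite c eqxx in e.
    have ra : row_of (rsk_P w) d = 0 by apply: rowA; apply/andP; split; clear -hd c; lia.
    have rb : row_of (rsk_P w) d.+1 = 0 by apply: rowA; apply/andP; split; clear -hd c; lia.
    by rewrite ra rb.
  have ra : row_of (rsk_P w) d = 1 by apply: rowB; apply/andP; split; clear -hd c; lia.
  have rb : row_of (rsk_P w) d.+1 = 1 by apply: rowB; apply/andP; split; clear -hd c; lia.
  by rewrite ra rb.
set D := descents T.
have sD : sorted ltn D := sorted_filter ltn_trans _ (iota_ltn_sorted 1 N.-1).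
have memD z : (z \in D) = (is_descent T z && (1 <= z < N)).
  rewrite /D /descents mem_filter mem_iota; case: (is_descent T z) => //=.
  rewrite -/N; apply/idP/idP; lia.
have imD : i + m \in D by rewrite memD desc ?eqxx /=; lia.
have [k [kD Dk]] : exists k, k < size D /\ nth 0 D k = i + m.
  by exists (index (i + m) D); rewrite index_mem nth_index.
have sS : sorted leq (0 :: rcons D N).
  rewrite /= rcons_path; apply/andP; split.
    have : sorted leq D by apply: sub_sorted sD => a b; apply: ltnW.
    by case: (D).
  move: (mem_last 0 D); rewrite in_cons => /orP [/eqP -> // | ].
  by rewrite memD => /andP [_ /andP [_ /ltnW]].
have psumE j : j <= size D + 1 -> sumn (take j (Des T)) = nth 0 (0 :: rcons D N) j.
  by move=> hj; rewrite /Des -/D psum ?subn0 // size_rcons; lia.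
have lowk : nth 0 (0 :: rcons D N) k < i.
  case: k kD Dk => [|k'] kD Dk //=.
  rewrite nth_rcons (ltn_trans (ltnSn k') kD).
  have pD : nth 0 D k' \in D by rewrite mem_nth // (ltn_trans (ltnSn k') kD).
  have plt : nth 0 D k' < i + m by rewrite -Dk; apply: srt_nth.
  move: pD; rewrite memD => /andP [pd _].
  rewrite ltnNge; apply/negP => ip.
  by move: pd; rewrite desc ?(ltn_eqF plt) //; lia.
have upk : i + 2 * m <= nth 0 (0 :: rcons D N) k.+2.
  rewrite /= nth_rcons.
  case: ifP => h.
    have pD : nth 0 D k.+1 \in D by rewrite mem_nth.
    have plt : i + m < nth 0 D k.+1 by rewrite -Dk; apply: srt_nth.
    move: pD; rewrite memD => /andP [pd _].
    rewrite leqNgt; apply/negP => ip.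
    by move: pd; rewrite desc ?(gtn_eqF plt) //; lia.
  have -> : k.+1 == size D by rewrite eqn_leq kD leqNgt h.
  by [].
exists k.+1; split => //.
- by rewrite /Des size_pairmap size_rcons.
- move=> x hx; rewrite unfold_in /block /= !psumE; try lia.
  rewrite /= nth_rcons kD Dk; apply/andP; split; lia.
- move=> x hx; rewrite unfold_in /block /= !psumE; try lia.
  rewrite [X in X < x]/= nth_rcons kD Dk; apply/andP; split; lia.
Qed.
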